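(* Let $n\ge 3$, $0<m<\frac{n-2}{n}$, $m\ne\frac{n-2}{n+2}$, $\lambda>0$, $\beta>0$. Let $v$ be the radially symmetric solution described in the context, $w(s)=r^2v(r)^{1-m}$ with $s=\log r$, $h(s)=w(s)-\frac{2(n-1)(n-2-nm)}{(1-m)\beta}s$, and \[ h_1(s)=h(s)+\frac{(n-1)[n-2-(n+2)m]}{(1-m)\beta}\log s . \] Then \[ \lim_{s\to\infty}\frac{s^2h_{1,s}(s)}{\log s}=-\frac{(n-1)(n-2-(n+2)m)^2}{2(n-2-nm)(1-m)\beta}. \]
   Context: $v=v(r)$, $r=|x|$, is the unique radially symmetric positive classical solution of $\frac{n-1}{m}\Delta v^m+\frac{2\beta}{1-m}v+\beta x\cdot\nabla v=0$ in $\mathbb{R}^n$ with $v(0)=\lambda$. $h_{1,s}$ denotes the derivative of $h_1$ in $s$. *)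

(* Defs.v *)
From Stdlib Require Import Reals.
From Coquelicot Require Import Coquelicot.
Open Scope R_scope.

(* v : R -> R is the radial profile v(r), extended evenly to R, so that
   x |-> v(|x|) is C^2 on R^n  <=>  v is even and C^2 on R.
   Radial form of  (n-1)/m Δ(v^m) + 2β/(1-m) v + β x.∇v = 0 :
   for r > 0, with u = v^m,
     (n-1)/m (u'' + (n-1)/r u') + 2β/(1-m) v + β r v' = 0. *)
Definition radial_solution (n : nat) (m beta lambda : R) (v : R -> R) : Prop :=
  (forall r, 0 < v r) /\
  (forall r, v (- r) = v r) /\
  (forall r, ex_derive v r) /\
  (forall r, ex_derive (Derive v) r) /\
  (forall r, continuous (Derive_n v 2) r) /\
  v 0 = lambda /\
  (forall r, 0 < r ->
     (INR n - 1) / m *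
       (Derive_n (fun t => Rpower (v t) m) 2 r
        + (INR n - 1) / r * Derive (fun t => Rpower (v t) m) r)
     + 2 * beta / (1 - m) * v r + beta * r * Derive v r = 0).

Definition w_of (m : R) (v : R -> R) (s : R) : R :=
  exp (2 * s) * Rpower (v (exp s)) (1 - m).

Definition h_of (n : nat) (m beta : R) (v : R -> R) (s : R) : R :=
  w_of m v s - 2 * (INR n - 1) * (INR n - 2 - INR n * m) / ((1 - m) * beta) * s.

Definition h1_of (n : nat) (m beta : R) (v : R -> R) (s : R) : R :=
  h_of n m beta v s
  + (INR n - 1) * (INR n - 2 - (INR n + 2) * m) / ((1 - m) * beta) * ln s.

(* Main.v *)
Require Import Defs.
From Stdlib Require Import Reals.
From Coquelicot Require Import Coquelicot.
From Stdlib Require Import Lra Psatz Classical.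
Open Scope R_scope.

Lemma lim_mult (f g : R -> R) (a b : R) :
  is_lim f p_infty a -> is_lim g p_infty b -> is_lim (fun t => f t * g t) p_infty (a * b).
Proof. intros Hf Hg. apply (is_lim_mult f g p_infty a b Hf Hg). easy. Qed.

Lemma lim_inv (f : R -> R) (a : R) :
  is_lim f p_infty a -> a <> 0 -> is_lim (fun t => / f t) p_infty (/ a).
Proof. intros Hf Ha. apply (is_lim_inv f p_infty a Hf). intro H; apply Ha; now injection H. Qed.

Lemma lim_inv_inf (f : R -> R) :
  is_lim f p_infty p_infty -> is_lim (fun t => / f t) p_infty 0.
Proof. intros Hf. replace (Finite 0) with (Rbar_inv p_infty) by reflexivity.
  apply (is_lim_inv f p_infty p_infty Hf). discriminate. Qed.

Lemma lim_ext (f g : R -> R) (l : Rbar) (N : R) :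
  (forall t, N < t -> f t = g t) -> is_lim f p_infty l -> is_lim g p_infty l.
Proof. intros H Hf. apply (is_lim_ext_loc f g). exists N. auto. auto. Qed.

Lemma lim_plus (f g : R -> R) (a b : R) :
  is_lim f p_infty a -> is_lim g p_infty b -> is_lim (fun t => f t + g t) p_infty (a + b).
Proof. intros. now apply is_lim_plus'. Qed.

Lemma lim_const (a : R) : is_lim (fun _ => a) p_infty a.
Proof. apply is_lim_const. Qed.

Lemma lim_eq (f : R -> R) (a b : R) : a = b -> is_lim f p_infty a -> is_lim f p_infty b.
Proof. intros ->; auto. Qed.

Lemma lim_inf_inv_x : is_lim (fun t => / t) p_infty 0.
Proof. apply lim_inv_inf. apply is_lim_id. Qed.

Lemma lim_inv_ln : is_lim (fun t => / ln t) p_infty 0.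
Proof. apply lim_inv_inf. apply is_lim_ln_p. Qed.

Lemma lim_fin_spec (f : R -> R) (l : R) :
  is_lim f p_infty l <-> forall eps, 0 < eps -> exists N, forall t, N < t -> Rabs (f t - l) < eps.
Proof.
  rewrite <- is_lim_spec. split.
  - intros H eps He. destruct (H (mkposreal eps He)) as [N HN]. exists N. auto.
  - intros H eps. destruct (H eps (cond_pos eps)) as [N HN]. exists N. auto.
Qed.

Lemma lim_inf_spec (f : R -> R) :
  is_lim f p_infty p_infty <-> forall M, exists N, forall t, N < t -> M < f t.
Proof. rewrite <- is_lim_spec. split; intros H M; apply H. Qed.

Lemma lim_ev_pos (f : R -> R) (l : R) : is_lim f p_infty l -> 0 < l ->
  exists N, forall t, N < t -> l / 2 < f t.
Proof. intros H Hl. rewrite lim_fin_spec in H. destruct (H (l/2)) as [N HN]. lra.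
  exists N. intros t Ht. specialize (HN t Ht). apply Rabs_def2 in HN. lra. Qed.

Lemma lim_ev_bound (f : R -> R) (l : R) : is_lim f p_infty l ->
  exists N, forall t, N < t -> Rabs (f t) <= Rabs l + 1.
Proof. intros H. rewrite lim_fin_spec in H. destruct (H 1) as [N HN]. lra.
  exists N. intros t Ht. specialize (HN t Ht).
  pose proof (Rabs_triang_inv (f t) l). lra. Qed.

Lemma lim_bounded_mult0 (f g : R -> R) (B : R) (N : R) :
  (forall t, N < t -> Rabs (f t) <= B) -> is_lim g p_infty 0 -> is_lim (fun t => f t * g t) p_infty 0.
Proof.
  intros Hf Hg. rewrite lim_fin_spec in *. intros eps He.
  destruct (Hg (eps / (Rabs B + 1))) as [N2 H2].
  { apply Rdiv_lt_0_compat; auto. pose proof (Rabs_pos B); lra. }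
  exists (Rmax N N2). intros t Ht.
  assert (N < t) by (eapply Rle_lt_trans; [apply Rmax_l|eauto]).
  assert (N2 < t) by (eapply Rle_lt_trans; [apply Rmax_r|eauto]).
  specialize (Hf t H). specialize (H2 t H0). rewrite Rminus_0_r in *.
  rewrite Rabs_mult. pose proof (Rabs_pos B). pose proof (Rabs_pos (g t)).
  pose proof (Rle_abs B).
  assert (Rabs (g t) * (Rabs B + 1) < eps).
  { apply (Rmult_lt_compat_r (Rabs B + 1)) in H2; [|lra].
    unfold Rdiv in H2. rewrite Rmult_assoc, Rinv_l in H2; lra. }
  nra.
Qed.

Lemma D_eq (f : R -> R) (x a b : R) : is_derive f x a -> a = b -> is_derive f x b.
Proof. intros H <-; exact H. Qed.
Lemma D_plus (f g : R -> R) (x a b : R) : is_derive f x a -> is_derive g x b ->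
  is_derive (fun t => f t + g t) x (a + b).
Proof. intros H H0. exact (is_derive_plus f g x a b H H0). Qed.
Lemma D_minus (f g : R -> R) (x a b : R) : is_derive f x a -> is_derive g x b ->
  is_derive (fun t => f t - g t) x (a - b).
Proof. intros H H0. exact (is_derive_minus f g x a b H H0). Qed.
Lemma D_mult (f g : R -> R) (x a b : R) : is_derive f x a -> is_derive g x b ->
  is_derive (fun t => f t * g t) x (a * g x + f x * b).
Proof. intros H H0. exact (is_derive_mult f g x a b H H0 Rmult_comm). Qed.
Lemma D_scal (f : R -> R) (c x a : R) : is_derive f x a ->
  is_derive (fun t => c * f t) x (c * a).
Proof. intros H. exact (is_derive_scal f x c a H). Qed.
Lemma D_const (c x : R) : is_derive (fun _ => c) x 0.
Proof. exact (is_derive_const (K:=R_AbsRing) c x). Qed.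
Lemma D_id (x : R) : is_derive (fun t => t) x 1.
Proof. exact (is_derive_id (K:=R_AbsRing) x). Qed.
Lemma D_ext (f g : R -> R) (x l : R) : (forall t : R, f t = g t) -> is_derive f x l -> is_derive g x l.
Proof. intros H H0. exact (is_derive_ext f g x l H H0). Qed.


Lemma cont_of_derive (h : R -> R) c l : is_derive h c l ->
  forall eps, 0 < eps -> exists d, 0 < d /\ forall y, Rabs (y - c) < d -> Rabs (h y - h c) < eps.
Proof.
  intros Hd eps He. apply is_derive_Reals in Hd.
  assert (Hc : continuity_pt h c).
  { apply derivable_continuous_pt. exists l. exact Hd. }
  destruct (Hc eps He) as [d [Hd0 Hd1]]. exists d. split; auto.
  intros y Hy. destruct (Req_dec y c) as [->|Hne].
  - rewrite Rminus_eq_0, Rabs_R0. lra.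
  - apply (Hd1 y). split. split. exact I. auto. exact Hy.
Qed.

Lemma deriv_left_sign (h : R -> R) c l : is_derive h c l -> 0 < l ->
  exists d, 0 < d /\ forall y, c - d < y < c -> h y < h c.
Proof.
  intros Hd Hl. apply is_derive_Reals in Hd.
  destruct (Hd l Hl) as [d Hd1]. exists d. split. apply cond_pos.
  intros y Hy. assert (Hne : y - c <> 0) by lra.
  assert (Ha : Rabs (y - c) < d) by (rewrite Rabs_left; lra).
  specialize (Hd1 (y - c) Hne Ha). replace (c + (y - c)) with y in Hd1 by ring.
  apply Rabs_def2 in Hd1. destruct Hd1 as [_ H2].
  assert (0 < (h y - h c) / (y - c)) by lra.
  assert (y - c < 0) by lra.
  destruct (Rle_or_lt (h c) (h y)); auto.
  assert ((h y - h c) / (y - c) <= 0).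
  { unfold Rdiv. apply Rmult_le_0_l. lra. left. apply Rinv_lt_0_compat; lra. }
  lra.
Qed.

Lemma barrier (h h' : R -> R) a :
  (forall t, a <= t -> is_derive h t (h' t)) -> 0 < h a ->
  (forall t, a <= t -> h t = 0 -> 0 < h' t) -> forall t, a <= t -> 0 < h t.
Proof.
  intros Hd Ha Hz t1 Ht1.
  destruct (Rlt_or_le 0 (h t1)) as [Hp|Hn]; auto. exfalso.
  set (E := fun x => a <= x <= t1 /\ forall y, a <= y <= x -> 0 < h y).
  assert (Hb : bound E). { exists t1. intros x [Hx _]. lra. }
  assert (Hex : exists x, E x). { exists a. split. lra. intros y Hy. replace y with a by lra. auto. }
  destruct (completeness E Hb Hex) as [c [Hub Hlub]].
  assert (Hac : a <= c). { apply Hub. split. lra. intros y Hy. replace y with a by lra. auto. }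
  assert (Hct : c <= t1). { apply Hlub. intros x [Hx _]. lra. }
  assert (Hpos : forall y, a <= y < c -> 0 < h y).
  { intros y Hy. destruct (Classical_Prop.classic (exists x, E x /\ y <= x)) as [[x [[_ Hx] Hyx]]|Hno].
    - apply Hx. lra.
    - exfalso. assert (c <= y). { apply Hlub. intros x Ex.
        destruct (Rle_or_lt x y); auto. exfalso. apply Hno. exists x. split; auto; lra. }
      lra. }
  destruct (Rtotal_order (h c) 0) as [Hneg|[Hz0|Hpc]].
  - assert (a < c). { destruct (Req_dec a c) as [<-|]; [lra|lra]. }
    destruct (cont_of_derive h c (h' c) (Hd c Hac) (- h c)) as [d [Hd0 Hd1]]. lra.
    set (y := Rmax a (c - d/2)).
    assert (a <= y < c). { unfold y. split. apply Rmax_l. apply Rmax_lub_lt; lra. }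
    assert (Rabs (y - c) < d). { rewrite Rabs_left by lra. unfold y.
       pose proof (Rmax_r a (c - d/2)). lra. }
    specialize (Hd1 y H1). apply Rabs_def2 in Hd1. specialize (Hpos y H0). lra.
  - assert (a < c). { destruct (Req_dec a c) as [<-|]; [lra|lra]. }
    destruct (deriv_left_sign h c (h' c) (Hd c Hac) (Hz c Hac Hz0)) as [d [Hd0 Hd1]].
    set (y := Rmax ((a + c)/2) (c - d/2)).
    assert (a <= y < c). { unfold y. split. pose proof (Rmax_l ((a + c)/2) (c - d/2)). lra. apply Rmax_lub_lt; lra. }
    assert (c - d < y < c). { split. unfold y. pose proof (Rmax_r ((a + c)/2) (c - d/2)). lra. lra. }
    specialize (Hd1 y H1). specialize (Hpos y H0). lra.
  - assert (c < t1). { destruct (Req_dec c t1) as [->|]; lra. }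
    destruct (cont_of_derive h c (h' c) (Hd c Hac) (h c)) as [d [Hd0 Hd1]]. lra.
    set (x := Rmin (c + d/2) t1).
    assert (c < x). { unfold x. apply Rmin_glb_lt; lra. }
    assert (E x). { split. split. lra. apply Rmin_r.
      intros y Hy. destruct (Rlt_or_le y c). apply Hpos; lra.
      assert (Rabs (y - c) < d). { rewrite Rabs_right by lra. assert (x <= c + d/2) by apply Rmin_l. lra. }
      specialize (Hd1 y H2). apply Rabs_def2 in Hd1. lra. }
    specialize (Hub x H1). lra.
Qed.


Lemma cont_pt_of_derive (f : R -> R) x l : is_derive f x l -> continuity_pt f x.
Proof. intros H. apply is_derive_Reals in H. apply derivable_continuous_pt. exists l. exact H. Qed.

Lemma mono (f f' : R -> R) a :
  (forall t, a <= t -> is_derive f t (f' t)) -> (forall t, a <= t -> 0 <= f' t) ->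
  forall t, a <= t -> f a <= f t.
Proof.
  intros Hd Hp t Ht. destruct (Req_dec a t) as [<-|Hne]. lra.
  destruct (MVT_gen f a t f') as [c [Hc Heq]].
  - intros x Hx. rewrite Rmin_left in Hx by lra. rewrite Rmax_right in Hx by lra. apply Hd. lra.
  - intros x Hx. rewrite Rmin_left in Hx by lra. rewrite Rmax_right in Hx by lra.
    apply (cont_pt_of_derive f x (f' x)). apply Hd. lra.
  - rewrite Rmin_left in Hc by lra. rewrite Rmax_right in Hc by lra.
    assert (0 <= f' c) by (apply Hp; lra). nra.
Qed.

Lemma conv (y y' Gm H : R -> R) (t0 l : R) :
  (forall t, t0 <= t -> is_derive y t (y' t)) ->
  (forall t, t0 <= t -> y' t = - Gm t * y t + H t) ->
  (forall t, t0 <= t -> 1 <= Gm t) ->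
  is_lim (fun t => H t / Gm t) p_infty l -> is_lim y p_infty l.
Proof.
  intros Hd Heq HG Hl. rewrite lim_fin_spec in *. intros eps He.
  set (d := eps / 4). assert (Hdp : 0 < d) by (unfold d; lra).
  destruct (Hl d Hdp) as [N HN].
  set (t1 := Rmax t0 N + 1).
  assert (Ht0 : t0 < t1) by (unfold t1; pose proof (Rmax_l t0 N); lra).
  assert (HN1 : N < t1) by (unfold t1; pose proof (Rmax_r t0 N); lra).
  set (K := Rabs (y t1 - l) + 1).
  assert (HK : 0 < K) by (unfold K; pose proof (Rabs_pos (y t1 - l)); lra).
  assert (Hbnd : forall t, t1 <= t -> l - d < H t / Gm t < l + d).
  { intros t Ht. specialize (HN t ltac:(lra)). apply Rabs_def2 in HN. lra. }
  assert (Hbnd2 : forall t, t1 <= t -> Gm t * (l - d) < H t < Gm t * (l + d)).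
  { intros t Ht. specialize (Hbnd t Ht). specialize (HG t ltac:(lra)).
    assert (Hne : Gm t <> 0) by lra.
    replace (H t) with (Gm t * (H t / Gm t)) by (field; auto).
    split; apply Rmult_lt_compat_l; lra. }
  assert (Hexp : forall t, is_derive (fun t => exp (- (t - t1))) t (- exp (- (t - t1)))).
  { intros t. auto_derive. auto. unfold Rminus. simpl. ring. }
  assert (Hup : forall t, t1 <= t -> y t < l + 2 * d + K * exp (- (t - t1))).
  { intros t Ht.
    assert (0 < (l + 2 * d + K * exp (- (t - t1))) - y t); [|lra].
    apply (barrier (fun t => (l + 2 * d + K * exp (- (t - t1))) - y t)
                   (fun t => K * (- exp (- (t - t1))) - y' t) t1); auto.
    - intros s Hs. apply (D_minus (fun t => l + 2 * d + K * exp (- (t - t1))) y).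
      + eapply D_eq. apply (D_plus (fun _ => l + 2 * d) (fun t => K * exp (- (t - t1)))).
        * apply D_const.
        * apply D_scal. apply Hexp.
        * ring.
      + apply Hd. lra.
    - replace (t1 - t1) with 0 by ring. rewrite Ropp_0, exp_0.
      unfold K. pose proof (Rle_abs (y t1 - l)). lra.
    - intros s Hs Hz. rewrite Heq by lra.
      assert (y s = l + 2 * d + K * exp (- (s - t1))) by lra.
      rewrite H0. specialize (Hbnd2 s Hs). specialize (HG s ltac:(lra)).
      pose proof (exp_pos (- (s - t1))).
      assert (0 <= (Gm s - 1) * (d + K * exp (- (s - t1)))) by (apply Rmult_le_pos; nra).
      nra. }
  assert (Hlo : forall t, t1 <= t -> l - 2 * d - K * exp (- (t - t1)) < y t).
  { intros t Ht.
    assert (0 < y t - (l - 2 * d - K * exp (- (t - t1)))); [|lra].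
    apply (barrier (fun t => y t - (l - 2 * d - K * exp (- (t - t1))))
                   (fun t => y' t - (0 - K * (- exp (- (t - t1))))) t1); auto.
    - intros s Hs. apply (D_minus y (fun t => l - 2 * d - K * exp (- (t - t1)))).
      + apply Hd. lra.
      + apply (D_minus (fun _ => l - 2 * d) (fun t => K * exp (- (t - t1)))).
        * apply D_const.
        * apply D_scal. apply Hexp.
    - replace (t1 - t1) with 0 by ring. rewrite Ropp_0, exp_0.
      unfold K. pose proof (Rabs_Ropp (y t1 - l)). pose proof (Rle_abs (-(y t1 - l))). lra.
    - intros s Hs Hz. rewrite Heq by lra.
      assert (y s = l - 2 * d - K * exp (- (s - t1))) by lra.
      rewrite H0. specialize (Hbnd2 s Hs). specialize (HG s ltac:(lra)).
      pose proof (exp_pos (- (s - t1))).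
      assert (0 <= (Gm s - 1) * (d + K * exp (- (s - t1)))) by (apply Rmult_le_pos; nra).
      nra. }
  exists (Rmax t1 (t1 - ln (d / K))). intros t Ht.
  assert (Hs : t1 <= t) by (pose proof (Rmax_l t1 (t1 - ln (d / K))); lra).
  assert (Ht' : t1 - ln (d / K) < t) by (pose proof (Rmax_r t1 (t1 - ln (d / K))); lra).
  assert (HE : K * exp (- (t - t1)) < d).
  { assert (Hx : exp (- (t - t1)) < d / K).
    { rewrite <- (exp_ln (d / K)) by (apply Rdiv_lt_0_compat; lra). apply exp_increasing. lra. }
    apply (Rmult_lt_compat_l K) in Hx; auto. unfold Rdiv in Hx.
    rewrite <- Rmult_assoc, (Rmult_comm K d), Rmult_assoc, Rinv_r in Hx by lra. lra. }
  specialize (Hup t Hs). specialize (Hlo t Hs). pose proof (exp_pos (- (t - t1))).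
  apply Rabs_def1; unfold d in *; nra.
Qed.


Lemma lhop (f f' g g' : R -> R) (t0 l : R) :
  (forall t, t0 <= t -> is_derive f t (f' t)) ->
  (forall t, t0 <= t -> is_derive g t (g' t)) ->
  (forall t, t0 <= t -> 0 < g' t) ->
  is_lim g p_infty p_infty ->
  is_lim (fun t => f' t / g' t) p_infty l ->
  is_lim (fun t => f t / g t) p_infty l.
Proof.
  intros Hf Hg Hg' Hginf Hl. rewrite lim_fin_spec in *. rewrite lim_inf_spec in Hginf.
  intros eps He. set (d := eps / 2). assert (Hd : 0 < d) by (unfold d; lra).
  destruct (Hl d Hd) as [N HN].
  set (t1 := Rmax t0 N + 1).
  assert (Ht0 : t0 < t1) by (unfold t1; pose proof (Rmax_l t0 N); lra).
  assert (HN1 : N < t1) by (unfold t1; pose proof (Rmax_r t0 N); lra).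
  assert (Hb : forall t, t1 <= t -> (l - d) * g' t < f' t < (l + d) * g' t).
  { intros t Ht. specialize (HN t ltac:(lra)). apply Rabs_def2 in HN.
    specialize (Hg' t ltac:(lra)).
    replace (f' t) with ((f' t / g' t) * g' t) by (field; lra).
    split; apply Rmult_lt_compat_r; lra. }
  assert (HF : forall t, t1 <= t -> (l + d) * g t1 - f t1 <= (l + d) * g t - f t).
  { apply (mono (fun t => (l + d) * g t - f t) (fun t => (l + d) * g' t - f' t)).
    - intros t Ht. apply D_minus. apply D_scal. apply Hg; lra. apply Hf; lra.
    - intros t Ht. specialize (Hb t Ht). lra. }
  assert (HG : forall t, t1 <= t -> f t1 - (l - d) * g t1 <= f t - (l - d) * g t).
  { apply (mono (fun t => f t - (l - d) * g t) (fun t => f' t - (l - d) * g' t)).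
    - intros t Ht. apply D_minus. apply Hf; lra. apply D_scal. apply Hg; lra.
    - intros t Ht. specialize (Hb t Ht). lra. }
  set (C := Rabs ((l + d) * g t1 - f t1) + Rabs (f t1 - (l - d) * g t1) + 1).
  assert (HC : 0 < C) by (unfold C; pose proof (Rabs_pos ((l + d) * g t1 - f t1));
     pose proof (Rabs_pos (f t1 - (l - d) * g t1)); lra).
  destruct (Hginf (2 * C / d)) as [N2 HN2].
  exists (Rmax t1 N2). intros t Ht.
  assert (Ht1 : t1 <= t) by (pose proof (Rmax_l t1 N2); lra).
  assert (HgC : 2 * C / d < g t) by (apply HN2; pose proof (Rmax_r t1 N2); lra).
  assert (Hgp : 0 < g t) by (assert (0 < 2 * C / d) by (apply Rdiv_lt_0_compat; lra); lra).
  assert (HgC' : 2 * C < d * g t).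
  { apply (Rmult_lt_compat_l d) in HgC; auto. replace (d * (2 * C / d)) with (2 * C) in HgC by (field; lra). lra. }
  specialize (HF t Ht1). specialize (HG t Ht1).
  pose proof (Rle_abs ((l + d) * g t1 - f t1)). pose proof (Rle_abs (f t1 - (l - d) * g t1)).
  pose proof (Rabs_Ropp ((l + d) * g t1 - f t1)). pose proof (Rle_abs (- ((l + d) * g t1 - f t1))).
  pose proof (Rabs_Ropp (f t1 - (l - d) * g t1)). pose proof (Rle_abs (- (f t1 - (l - d) * g t1))).
  assert (Hq : f t = (f t / g t) * g t) by (field; lra).
  set (q := f t / g t) in *.
  assert (- eps * g t < (q - l) * g t < eps * g t).
  { unfold C in HgC'. unfold d in *. split; nra. }
  apply Rabs_def1; nra.
Qed.


Lemma partII (A G M D : R) (W p : R -> R) (s0 : R) :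
  0 < A -> 0 < G -> 0 < M ->
  (forall s, 0 < W s) ->
  (forall s, is_derive W s (W s * p s)) ->
  (forall s, is_derive p s (A - G * W s * p s - M * p s ^ 2 - D * p s)) ->
  0 < p s0 ->
  is_lim (fun s => s ^ 2 * (W s * p s - A / G + (D / G) / s) / ln s) p_infty
    (- D ^ 2 / (G * A)).
Proof.
  intros HA HG HM HW dW dp Hp0.
  assert (Hpos : forall t, s0 <= t -> 0 < p t).
  { apply (barrier p (fun s => A - G * W s * p s - M * p s ^ 2 - D * p s)); auto.
    intros t _ Hz. rewrite Hz. lra. }
  set (P := Rmax (p s0 + 1) (1 + (A + Rabs D) / M)).
  assert (HP1 : p s0 + 1 <= P) by apply Rmax_l.
  assert (HP2 : 1 + (A + Rabs D) / M <= P) by apply Rmax_r.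
  assert (HP3 : M + A + Rabs D <= M * P).
  { apply (Rmult_le_compat_l M) in HP2; [|lra].
    replace (M * (1 + (A + Rabs D) / M)) with (M + A + Rabs D) in HP2 by (field; lra). lra. }
  assert (HPge1 : 1 <= P).
  { pose proof (Rabs_pos D). assert (0 <= (A + Rabs D) / M) by (apply Rdiv_le_0_compat; lra). lra. }
  assert (Hup : forall t, s0 <= t -> p t < P).
  { intros t Ht. assert (0 < P - p t); [|lra].
    apply (barrier (fun s => P - p s) (fun s => 0 - (A - G * W s * p s - M * p s ^ 2 - D * p s)) s0); auto.
    - intros s _. apply D_minus. apply D_const. apply dp.
    - lra.
    - intros s _ Hz. assert (p s = P) by lra. rewrite H. specialize (HW s).
      pose proof (Rle_abs D). pose proof (Rle_abs (- D)). rewrite Rabs_Ropp in H1.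
      assert (0 < G * W s * P) by (apply Rmult_lt_0_compat; [apply Rmult_lt_0_compat|]; lra).
      assert (P * (M + A) <= P * (M * P - Rabs D)) by (apply Rmult_le_compat_l; lra).
      nra. }
  assert (HWmono : forall a t, s0 <= a -> a <= t -> W a <= W t).
  { intros a t Ha Hat. apply (mono W (fun s => W s * p s) a); auto.
    intros s Hs. specialize (HW s). specialize (Hpos s ltac:(lra)). nra. }
  assert (HWinf : is_lim W p_infty p_infty).
  { rewrite lim_inf_spec. intros L.
    destruct (classic (exists N, forall t, N < t -> L < W t)) as [H|H]; auto. exfalso.
    assert (HL : forall t, s0 <= t -> W t <= L).
    { intros t Ht. destruct (Rle_or_lt (W t) L) as [|Hlt]; auto. exfalso. apply H.
      exists t. intros u Hu. apply Rlt_le_trans with (W t); auto. apply HWmono; lra. }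
    set (C := G * L + Rabs D + M * P).
    assert (HLp : 0 < L) by (pose proof (HL s0 ltac:(lra)); pose proof (HW s0); lra).
    assert (HC : 0 < C) by (unfold C; pose proof (Rabs_pos D); nra).
    set (k := Rmin (p s0 / 2) (A / (2 * C))).
    assert (Hk1 : k <= p s0 / 2) by apply Rmin_l.
    assert (Hk2 : k <= A / (2 * C)) by apply Rmin_r.
    assert (Hk0 : 0 < k) by (apply Rmin_glb_lt; [lra| apply Rdiv_lt_0_compat; lra]).
    assert (HkC : k * C <= A / 2).
    { apply (Rmult_le_compat_r C) in Hk2; [|lra].
      replace (A / (2 * C) * C) with (A / 2) in Hk2 by (field; lra). lra. }
    assert (Hlow : forall t, s0 <= t -> k < p t).
    { intros t Ht. assert (0 < p t - k); [|lra].
      apply (barrier (fun s => p s - k) (fun s => (A - G * W s * p s - M * p s ^ 2 - D * p s) - 0) s0); auto.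
      - intros s _. apply D_minus. apply dp. apply D_const.
      - lra.
      - intros s Hs Hz. assert (p s = k) by lra. rewrite H0.
        specialize (HL s Hs). specialize (HW s). pose proof (Rle_abs D). pose proof (Rle_abs (- D)).
        rewrite Rabs_Ropp in H2.
        assert (k < P) by (specialize (Hup s0 ltac:(lra)); lra).
        assert (G * W s * k <= G * L * k) by (apply Rmult_le_compat_r; [lra| apply Rmult_le_compat_l; lra]).
        assert (M * k ^ 2 <= M * P * k) by (assert (0 <= M * k * (P - k)) by (apply Rmult_le_pos; nra); nra).
        assert (- D * k <= Rabs D * k) by nra.
        unfold C in HkC. nra. }
    set (w0 := W s0). assert (Hw0 : 0 < w0) by apply HW.
    assert (Hlin : forall t, s0 <= t -> W s0 + w0 * k * (t - s0) <= W t).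
    { intros t Ht.
      pose proof (mono (fun s => W s - w0 * k * s) (fun s => W s * p s - w0 * k * 1) s0) as Hm.
      assert (s0 <= t -> W s0 - w0 * k * s0 <= W t - w0 * k * t).
      { apply Hm.
        - intros s Hs. apply D_minus. apply dW. apply D_scal. apply D_id.
        - intros s Hs. specialize (HWmono s0 s ltac:(lra) Hs). specialize (Hlow s Hs).
          fold w0 in HWmono. nra. }
      specialize (H0 Ht). lra. }
    set (t := s0 + L / (w0 * k) + 1).
    assert (0 < L / (w0 * k)) by (apply Rdiv_lt_0_compat; nra).
    specialize (Hlin t ltac:(unfold t; lra)). specialize (HL t ltac:(unfold t; lra)).
    assert (w0 * k * (t - s0) = L + w0 * k) by (unfold t; field; nra).
    fold w0 in Hlin. assert (0 < w0 * k) by nra. lra. }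
  set (a1 := A / G).
  assert (Ha1 : 0 < a1) by (unfold a1; apply Rdiv_lt_0_compat; lra).
  assert (HGa1 : G * a1 = A) by (unfold a1; field; lra).
  set (z := fun t => W t * p t).
  set (X := fun t => (M - 1) * p t + D).
  set (Gm := fun t => G * W t + X t).
  assert (dz : forall t, is_derive z t (W t * A - z t * Gm t)).
  { intros t. unfold z, Gm, X. eapply D_eq. apply (D_mult W p). apply dW. apply dp. ring. }
  set (B := Rabs (M - 1) * P + Rabs D).
  assert (HXb : forall t, s0 < t -> Rabs (X t) <= B).
  { intros t Ht. unfold X, B. eapply Rle_trans. apply Rabs_triang.
    rewrite Rabs_mult. apply Rplus_le_compat_r. apply Rmult_le_compat_l. apply Rabs_pos.
    specialize (Hpos t ltac:(lra)). specialize (Hup t ltac:(lra)). rewrite Rabs_right; lra. }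
  assert (HB : 0 <= B) by (unfold B; pose proof (Rabs_pos (M-1)); pose proof (Rabs_pos D); nra).
  destruct (proj1 (lim_inf_spec W) HWinf ((4 + B) / G)) as [N1 HN1].
  set (T1 := Rmax s0 N1 + 1).
  assert (HT1a : s0 < T1) by (unfold T1; pose proof (Rmax_l s0 N1); lra).
  assert (HT1b : N1 < T1) by (unfold T1; pose proof (Rmax_r s0 N1); lra).
  assert (HGm : forall t, T1 <= t -> 4 <= Gm t).
  { intros t Ht. specialize (HN1 t ltac:(lra)). specialize (HXb t ltac:(lra)).
    unfold Gm. apply (Rmult_lt_compat_l G) in HN1; auto.
    replace (G * ((4 + B) / G)) with (4 + B) in HN1 by (field; lra).
    pose proof (Rle_abs (- X t)). rewrite Rabs_Ropp in H. lra. }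
  assert (HXW : is_lim (fun t => X t * / W t) p_infty 0).
  { apply (lim_bounded_mult0 X (fun t => / W t) B s0); auto. apply lim_inv_inf; auto. }
  assert (Hz : is_lim z p_infty a1).
  { apply (conv z (fun t => W t * A - z t * Gm t) Gm (fun t => W t * A) T1 a1).
    - intros; apply dz.
    - intros; ring.
    - intros t Ht. specialize (HGm t Ht). lra.
    - apply (lim_ext (fun t => A * / (G + X t * / W t)) _ _ T1).
      + intros t Ht. specialize (HGm t ltac:(lra)). specialize (HW t). unfold Gm in *.
        field. split; [|lra]. intro Hc.
        assert (G * W t + X t = W t * (G + X t / W t)) by (field; lra). lra.
      + apply (lim_eq _ (A * / (G + 0))). unfold a1; field; lra.
        apply lim_mult. apply lim_const. apply lim_inv. apply lim_plus. apply lim_const. auto. lra. }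
  assert (Hplim : is_lim p p_infty 0).
  { apply (lim_ext (fun t => z t * / W t) _ _ 0).
    - intros t _. unfold z. specialize (HW t). field. lra.
    - apply (lim_eq _ (a1 * 0)). ring. apply lim_mult; auto. apply lim_inv_inf; auto. }
  assert (HXlim : is_lim X p_infty D).
  { apply (lim_eq _ ((M - 1) * 0 + D)). ring. unfold X.
    apply lim_plus. apply lim_mult. apply lim_const. auto. apply lim_const. }
  assert (HWt : is_lim (fun t => W t / t) p_infty a1).
  { apply (lhop W z (fun t => t) (fun _ => 1) 0 a1).
    - intros; apply dW.
    - intros; apply D_id.
    - intros; lra.
    - apply is_lim_id.
    - apply (lim_ext z _ _ 0). intros; field. auto. }
  set (T2 := Rmax T1 1 + 1).
  assert (HT2a : T1 < T2) by (unfold T2; pose proof (Rmax_l T1 1); lra).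
  assert (HT2b : 1 < T2) by (unfold T2; pose proof (Rmax_r T1 1); lra).
  assert (Hy : is_lim (fun t => t * (z t - a1)) p_infty (- D / G)).
  { apply (conv (fun t => t * (z t - a1)) (fun t => 1 * (z t - a1) + t * ((W t * A - z t * Gm t) - 0))
      (fun t => Gm t - / t) (fun t => - t * a1 * X t) T2 (- D / G)).
    - intros t Ht. apply (D_mult (fun t => t) (fun t => z t - a1)). apply D_id.
      apply D_minus. apply dz. apply D_const.
    - intros t Ht. rewrite <- HGa1. unfold Gm. field. lra.
    - intros t Ht. specialize (HGm t ltac:(lra)).
      assert (/ t <= 1). { rewrite <- Rinv_1. apply Rinv_le_contravar; lra. } lra.
    - apply (lim_ext (fun t => - a1 * X t * / (G * (W t / t) + X t * / t - / t * / t)) _ _ T2).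
      + intros t Ht. specialize (HGm t ltac:(lra)).
        assert (/ t <= 1). { rewrite <- Rinv_1. apply Rinv_le_contravar; lra. }
        assert (Hne1 : Gm t - / t <> 0) by lra.
        assert (Hne2 : G * W t * t + X t * t - 1 <> 0).
        { intro Hc. apply Hne1. unfold Gm. apply (Rmult_eq_reg_r t); [|lra].
          rewrite Rmult_0_l. rewrite <- Hc. field. lra. }
        unfold Gm in *. field. split; [|lra]. intro Hc. apply Hne2.
        replace (G * W t * t + X t * t - 1) with ((G * (W t / t) + X t * / t - / t * / t) * (t * t)) by (field; lra).
        rewrite Hc. ring.
      + apply (lim_eq _ (- a1 * D * / (G * a1 + D * 0 - 0 * 0))).
        { rewrite HGa1. unfold a1. field. lra. }
        apply lim_mult. apply lim_mult. apply lim_const. auto.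
        apply lim_inv. apply (lim_plus (fun t => G * (W t / t) + X t * / t) (fun t => - (/ t * / t))).
        apply lim_plus. apply lim_mult. apply lim_const. auto. apply lim_mult. auto. apply lim_inf_inv_x.
        apply (lim_eq _ (- (0 * 0))). ring.
        apply (is_lim_opp (fun t => / t * / t) p_infty (Finite (0 * 0))). apply lim_mult; apply lim_inf_inv_x.
        rewrite HGa1. lra. }
  assert (HQ : is_lim (fun t => (W t - a1 * t) / ln t) p_infty (- D / G)).
  { apply (lhop (fun t => W t - a1 * t) (fun t => z t - a1 * 1) ln (fun t => / t) 1 (- D / G)).
    - intros t Ht. apply D_minus. apply dW. apply D_scal. apply D_id.
    - intros t Ht. apply is_derive_ln. lra.
    - intros t Ht. apply Rinv_0_lt_compat. lra.
    - apply is_lim_ln_p.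
    - apply (lim_ext (fun t => t * (z t - a1)) _ _ 0); auto. intros t Ht. field. lra. }
  set (T3 := Rmax T2 2 + 1).
  assert (HT3a : T2 < T3) by (unfold T3; pose proof (Rmax_l T2 2); lra).
  assert (HT3b : 2 < T3) by (unfold T3; pose proof (Rmax_r T2 2); lra).
  set (R1 := fun t => D * ((W t - a1 * t) / ln t) - a1 * (M - 1) * (z t * / (W t / t)) * / ln t
                      + X t * (D / G) * / ln t - (D / G) * / t * / ln t).
  set (R2 := fun t => G * (W t / t) + X t * / t - 2 * / t * / t + / t * / t * / ln t).
  set (Gm3 := fun t => Gm t - 2 / t + / (t * ln t)).
  set (H3 := fun t => (t ^ 2 / ln t) * (- a1 * X t + Gm t * (D / G) / t - (D / G) / t ^ 2)).
  assert (Hln : forall t, 1 < t -> 0 < ln t).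
  { intros t Ht. rewrite <- ln_1. apply ln_increasing; lra. }
  apply (conv _ (fun t => (2 * t / ln t - t / ln t ^ 2) * (z t - a1 + D / G / t)
                   + (t ^ 2 / ln t) * ((W t * A - z t * Gm t) - 0 + D / G * (- / t ^ 2)))
           Gm3 H3 T3).
  - intros t Ht. specialize (Hln t ltac:(lra)).
    apply (D_ext (fun t => (t ^ 2 / ln t) * (z t - a1 + D / G / t))).
    { intros u. unfold z. unfold Rdiv. ring. }
    apply (D_mult (fun t => t ^ 2 / ln t) (fun t => z t - a1 + D / G / t)).
    + auto_derive. repeat split; lra. field. lra.
    + apply D_plus. apply D_minus. apply dz. apply D_const.
      auto_derive. lra. field. lra.
  - intros t Ht. specialize (Hln t ltac:(lra)). unfold Gm3, H3. rewrite <- HGa1. unfold Gm, X, z. field. lra.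
  - intros t Ht. specialize (Hln t ltac:(lra)). specialize (HGm t ltac:(lra)). unfold Gm3.
    assert (2 / t <= 1). { apply (Rmult_le_reg_r t). lra. field_simplify; lra. }
    assert (0 < / (t * ln t)) by (apply Rinv_0_lt_compat; nra). lra.
  - apply (lim_ext (fun t => R1 t * / R2 t) _ _ T3).
    + intros t Ht. specialize (Hln t ltac:(lra)). specialize (HGm t ltac:(lra)). pose proof (HW t).
      assert (E1 : H3 t = t * R1 t). { unfold H3, R1, Gm, z, X. field. repeat split; lra. }
      assert (E2 : Gm3 t = t * R2 t). { unfold Gm3, R2, Gm. field. lra. }
      assert (Hg3 : 0 < Gm3 t).
      { unfold Gm3. assert (2 / t <= 1). { apply (Rmult_le_reg_r t). lra. field_simplify; lra. }
        assert (0 < / (t * ln t)) by (apply Rinv_0_lt_compat; nra). lra. }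
      rewrite E1, E2. rewrite E2 in Hg3. assert (R2 t <> 0) by (intro Hc; rewrite Hc in Hg3; lra).
      field. split; lra.
    + apply (lim_eq _ ((D * (- D / G) - a1 * (M - 1) * (a1 * / a1) * 0 + D * (D / G) * 0 - (D / G) * 0 * 0)
                        * / (G * a1 + D * 0 - 2 * 0 * 0 + 0 * 0 * 0))).
      { rewrite HGa1. unfold a1. field. lra. }
      apply lim_mult.
      * unfold R1. apply is_lim_minus'. apply lim_plus. apply is_lim_minus'.
        -- apply lim_mult. apply lim_const. exact HQ.
        -- apply lim_mult. apply lim_mult. apply lim_const. apply lim_mult. exact Hz.
           apply lim_inv. exact HWt. lra. apply lim_inv_ln.
        -- apply lim_mult. apply lim_mult. exact HXlim. apply lim_const. apply lim_inv_ln.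
        -- apply lim_mult. apply lim_mult. apply lim_const. apply lim_inf_inv_x. apply lim_inv_ln.
      * apply lim_inv. unfold R2. apply lim_plus. apply is_lim_minus'. apply lim_plus.
        -- apply lim_mult. apply lim_const. exact HWt.
        -- apply lim_mult. exact HXlim. apply lim_inf_inv_x.
        -- apply lim_mult. apply lim_mult. apply lim_const. apply lim_inf_inv_x. apply lim_inf_inv_x.
        -- apply lim_mult. apply lim_mult. apply lim_inf_inv_x. apply lim_inf_inv_x. apply lim_inv_ln.
        -- rewrite HGa1. lra.
Qed.


Lemma dU (v : R -> R) (m x : R) : (forall r, 0 < v r) -> (forall r, ex_derive v r) ->
  is_derive (fun t => Rpower (v t) m) x (m * Rpower (v x) m * Derive v x / v x).
Proof.
  intros Hv Hd. unfold Rpower. auto_derive.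
  - split. apply Hd. split. apply Hv. auto.
  - specialize (Hv x). change (Derive (fun x0 => v x0) x) with (Derive v x). field. lra.
Qed.

Lemma dU2 (v : R -> R) (m x : R) : (forall r, 0 < v r) -> (forall r, ex_derive v r) ->
  (forall r, ex_derive (Derive v) r) ->
  Derive_n (fun t => Rpower (v t) m) 2 x =
  m * (m * Rpower (v x) m * Derive v x / v x) * Derive v x / v x
  + m * Rpower (v x) m * Derive (Derive v) x / v x
  - m * Rpower (v x) m * Derive v x * Derive v x / (v x * v x).
Proof.
  intros Hv Hd Hd2. simpl.
  rewrite (Derive_ext _ (fun y => m * Rpower (v y) m * Derive v y / v y)).
  2: { intros t. apply is_derive_unique. apply dU; auto. }
  apply is_derive_unique. unfold Rpower. auto_derive.
  - pose proof (Hv x). repeat split; try apply Hd; try apply Hd2; lra.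
  - specialize (Hv x). change (Derive (fun x0 => v x0) x) with (Derive v x).
    change (Derive (fun x0 => Derive v x0) x) with (Derive (Derive v) x). field. lra.
Qed.

Definition pp (m : R) (v : R -> R) (s : R) : R :=
  2 + (1 - m) * exp s * Derive v (exp s) / v (exp s).

Lemma dW (m : R) (v : R -> R) (s : R) : (forall r, 0 < v r) -> (forall r, ex_derive v r) ->
  is_derive (w_of m v) s (w_of m v s * pp m v s).
Proof.
  intros Hv Hd. unfold w_of, pp, Rpower. auto_derive.
  - pose proof (Hv (exp s)). repeat split; try apply Hd; lra.
  - pose proof (Hv (exp s)). change (Derive (fun x0 => v x0) (exp s)) with (Derive v (exp s)).
    field. lra.
Qed.

Lemma dp (n : nat) (m beta : R) (v : R -> R) (s : R) :
  0 < m -> m < 1 -> 1 < INR n -> 0 < beta ->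
  (forall r, 0 < v r) -> (forall r, ex_derive v r) -> (forall r, ex_derive (Derive v) r) ->
  (forall r, 0 < r ->
     (INR n - 1) / m *
       (Derive_n (fun t => Rpower (v t) m) 2 r
        + (INR n - 1) / r * Derive (fun t => Rpower (v t) m) r)
     + 2 * beta / (1 - m) * v r + beta * r * Derive v r = 0) ->
  is_derive (pp m v) s
    (2 * (INR n - 2 - INR n * m) / (1 - m)
     - beta / (INR n - 1) * w_of m v s * pp m v s
     - m / (1 - m) * pp m v s ^ 2
     - (INR n - 2 - (INR n + 2) * m) / (1 - m) * pp m v s).
Proof.
  intros Hm0 Hm1 Hn Hb Hv Hd Hd2 Hode.
  set (r := exp s). assert (Hr : 0 < r) by apply exp_pos.
  specialize (Hode r Hr). rewrite dU2 in Hode; auto.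
  assert (HU1 : Derive (fun t : R => Rpower (v t) m) r = m * Rpower (v r) m * Derive v r / v r)
    by (apply is_derive_unique; apply dU; auto).
  rewrite HU1 in Hode.
  assert (HvR : 0 < v r) by apply Hv.
  set (F := Rpower (v r) (1 - m)).
  assert (HF : 0 < F) by (unfold F, Rpower; apply exp_pos).
  assert (HE : Rpower (v r) m = v r / F).
  { assert (HEF : Rpower (v r) m * F = v r).
    { unfold F. rewrite <- Rpower_plus. replace (m + (1 - m)) with 1 by ring. apply Rpower_1; lra. }
    apply (Rmult_eq_reg_r F); [|lra]. rewrite HEF. field. lra. }
  rewrite HE in Hode.
  assert (HW : w_of m v s = r * r * F).
  { unfold w_of, F, r. replace (2 * s) with (s + s) by ring. rewrite exp_plus. ring. }
  rewrite HW. unfold pp. fold r. auto_derive.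
  - fold r. pose proof (Hv r). repeat split; try apply Hd; try apply Hd2; lra.
  - fold r. change (Derive (fun x0 => v x0) r) with (Derive v r).
    change (Derive (fun x0 => Derive v x0) r) with (Derive (Derive v) r).
    apply Rminus_diag_uniq.
    match type of Hode with ?L = 0 =>
      transitivity ((1 - m) * r * r * F / ((INR n - 1) * v r) * L) end.
    + field. repeat split; lra.
    + rewrite Hode. ring.
Qed.


Theorem lemma2p5 (n : nat) (m lambda beta : R) (v : R -> R) :
  (3 <= n)%nat ->
  0 < m -> m < (INR n - 2) / INR n ->
  m <> (INR n - 2) / (INR n + 2) ->
  0 < lambda -> 0 < beta ->
  radial_solution n m beta lambda v ->
  is_lim (fun s => s ^ 2 * Derive (h1_of n m beta v) s / ln s) p_infty
    (Finite (- ((INR n - 1) * (INR n - 2 - (INR n + 2) * m) ^ 2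
                / (2 * (INR n - 2 - INR n * m) * (1 - m) * beta)))).
Proof.
  intros Hn Hm0 Hm1 _ Hl Hb [Hvpos [_ [Hd1 [Hd2 [_ [Hv0 Hode]]]]]].
  assert (HN : 3 <= INR n) by (replace 3 with (INR 3) by (simpl; ring); apply le_INR; auto).
  set (N := INR n) in *.
  assert (HNm : N * m < N - 2).
  { apply (Rmult_lt_compat_l N) in Hm1; [|lra].
    replace (N * ((N - 2) / N)) with (N - 2) in Hm1 by (field; lra). lra. }
  assert (Hm1' : m < 1) by nra.
  set (A := 2 * (N - 2 - N * m) / (1 - m)).
  set (G := beta / (N - 1)).
  set (M := m / (1 - m)).
  set (D := (N - 2 - (N + 2) * m) / (1 - m)).
  assert (HA : 0 < A) by (unfold A; apply Rdiv_lt_0_compat; lra).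
  assert (HG : 0 < G) by (unfold G; apply Rdiv_lt_0_compat; lra).
  assert (HM : 0 < M) by (unfold M; apply Rdiv_lt_0_compat; lra).
  assert (Hs0 : exists s0, 0 < pp m v s0).
  { destruct (cont_of_derive v 0 (Derive v 0) (Derive_correct v 0 (Hd1 0)) (lambda / 2)) as [d1 [Hd1p Hc1]]. lra.
    destruct (cont_of_derive (Derive v) 0 (Derive (Derive v) 0) (Derive_correct _ 0 (Hd2 0)) 1) as [d2 [Hd2p Hc2]]. lra.
    set (K := Rabs (Derive v 0) + 1).
    assert (HK : 0 < K) by (unfold K; pose proof (Rabs_pos (Derive v 0)); lra).
    set (r := Rmin (Rmin d1 d2) (lambda / (2 * K)) / 2).
    assert (Hr0 : 0 < r).
    { unfold r. apply Rdiv_lt_0_compat; [|lra]. apply Rmin_glb_lt. apply Rmin_glb_lt; lra.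
      apply Rdiv_lt_0_compat; lra. }
    assert (Hr1 : r < d1).
    { unfold r. pose proof (Rmin_l (Rmin d1 d2) (lambda / (2 * K))). pose proof (Rmin_l d1 d2). lra. }
    assert (Hr2 : r < d2).
    { unfold r. pose proof (Rmin_l (Rmin d1 d2) (lambda / (2 * K))). pose proof (Rmin_r d1 d2). lra. }
    assert (Hr3 : r * K <= lambda / 4).
    { assert (r <= lambda / (2 * K) / 2) by (unfold r; pose proof (Rmin_r (Rmin d1 d2) (lambda / (2 * K))); lra).
      apply (Rmult_le_compat_r K) in H; [|lra]. replace (lambda / (2 * K) / 2 * K) with (lambda / 4) in H by (field; lra). lra. }
    assert (Hvr : lambda / 2 < v r).
    { specialize (Hc1 r ltac:(rewrite Rminus_0_r, Rabs_right; lra)). rewrite Hv0 in Hc1.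
      apply Rabs_def2 in Hc1. lra. }
    assert (HV1 : Rabs (Derive v r) <= K).
    { specialize (Hc2 r ltac:(rewrite Rminus_0_r, Rabs_right; lra)).
      pose proof (Rabs_triang_inv (Derive v r) (Derive v 0)). unfold K. lra. }
    exists (ln r). unfold pp. rewrite exp_ln by lra.
    pose proof (Rle_abs (Derive v r)). pose proof (Rle_abs (- Derive v r)). rewrite Rabs_Ropp in H0.
    assert (Hq1 : r * Derive v r <= lambda / 4) by nra.
    assert (Hq2 : - (lambda / 4) <= r * Derive v r) by nra.
    assert (Hnum : 0 < 2 * v r + (1 - m) * (r * Derive v r)) by nra.
    replace (2 + (1 - m) * r * Derive v r / v r) with ((2 * v r + (1 - m) * (r * Derive v r)) * / v r)
      by (field; lra).
    apply Rmult_lt_0_compat; auto. apply Rinv_0_lt_compat; lra. }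
  destruct Hs0 as [s0 Hs0].
  assert (HWpos : forall s, 0 < w_of m v s).
  { intros s. unfold w_of, Rpower. apply Rmult_lt_0_compat; apply exp_pos. }
  pose proof (partII A G M D (w_of m v) (pp m v) s0 HA HG HM HWpos
    (fun s => dW m v s Hvpos Hd1)
    (fun s => dp n m beta v s Hm0 Hm1' ltac:(fold N; lra) Hb Hvpos Hd1 Hd2 Hode) Hs0) as Hlim.
  assert (Hder : forall s, 0 < s -> Derive (h1_of n m beta v) s
                     = w_of m v s * pp m v s - A / G + (D / G) / s).
  { intros s Hs. apply is_derive_unique. unfold h1_of, h_of. fold N.
    eapply D_eq.
    - apply (D_plus (fun s => w_of m v s - 2 * (N - 1) * (N - 2 - N * m) / ((1 - m) * beta) * s)
                    (fun s => (N - 1) * (N - 2 - (N + 2) * m) / ((1 - m) * beta) * ln s)).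
      + apply D_minus. apply dW; auto. apply D_scal. apply D_id.
      + apply D_scal. apply is_derive_ln. auto.
    - unfold A, G, D. field. repeat split; lra. }
  apply (is_lim_ext_loc (fun s => s ^ 2 * (w_of m v s * pp m v s - A / G + (D / G) / s) / ln s)).
  { exists 0. intros s Hs. rewrite Hder; auto. }
  apply (lim_eq _ (- D ^ 2 / (G * A))); auto.
  unfold A, G, D. field. repeat split; lra.
Qed.
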